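(* Let $X$ be a finite $T_0$ topological space, $\mathcal V$ a multivector field on $X$ with $X$ invariant, $\mathcal M=\{M_p\mid p\in\mathbb P\}$ a Morse predecomposition of $X$, and $\le$ an admissible preorder on $\mathbb P$. Let $\mathcal Q$ be a partition of $\mathbb P$ into nonempty subsets that are convex with respect to $\le$, and suppose that the relation $\le_{\mathcal Q}$ on $\mathcal Q$, defined by $Q\le_{\mathcal Q}Q'$ iff there exist $q\in Q$, $q'\in Q'$ with $q\le q'$, is a partial order. Then $\mathcal M':=\{M_Q\mid Q\in\mathcal Q\}$ is a Morse decomposition of $X$.
   Context: Notation: $\operatorname{cl}$ is closure; $A\subset X$ is locally closed if $\operatorname{cl}A\setminus A$ is closed. A multivector field $\mathcal V$ on $X$ is a partition of $X$ into locally closed sets (multivectors); $[x]_{\mathcal V}$ is the multivector containing $x$. A multivector $V$ is critical if $H(\operatorname{cl}V,\operatorname{cl}V\setminus V)$ (relative singular homology) is nontrivial, regular otherwise. $A$ is $\mathcal V$-compatible if it is a union of multivectors; $\langle A\rangle_{\mathcal V}$ is the smallest locally closed $\mathcal V$-compatible set containing $A$. $\Pi_{\mathcal V}(x)=\operatorname{cl}\{x\}\cup[x]_{\mathcal V}$. A solution is a partial map $\gamma:\mathbb Z\nrightarrow X$ with domain an integer interval and $\gamma(t+1)\in\Pi_{\mathcal V}(\gamma(t))$; a path has finite domain; a full solution has domain $\mathbb Z$. $\alpha(\gamma)=\langle\bigcap_{t\le0}\gamma((-\infty,t])\rangle_{\mathcal V}$, $\omega(\gamma)=\langle\bigcap_{t\ge0}\gamma([t,\infty))\rangle_{\mathcal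 V}$. A full solution is essential unless $\alpha(\gamma)$ or $\omega(\gamma)$ lies in a single regular multivector; an essential solution in $A$ is one with image in $A$. $\operatorname{Inv}S$ is the set of $x\in S$ with an essential solution $\gamma$ in $S$, $\gamma(0)=x$; $S$ is invariant if $\operatorname{Inv}S=S$. An invariant $S$ is isolated invariant if there is a closed $N\supset\Pi_{\mathcal V}(S)$ such that every path in $N$ with endpoints in $S$ has image in $S$. A full solution is a link from $S_1$ to $S_2$ if $\alpha(\gamma)\cap S_1\ne\emptyset\ne\omega(\gamma)\cap S_2$. A Morse predecomposition of $X$ is an indexed family of mutually disjoint isolated invariant subsets $\{M_p\mid p\in\mathbb P\}$ such that every essential solution in $X$ is a link from some $M_p$ to some $M_q$. A preorder $\le$ on $\mathbb P$ is admissible if a link from $M_p$ to $M_q$ implies $q\le p$. $\mathbb Q\subset\mathbb P$ is convex w.r.t. $\le$ if $p\le r\le q$ with $p,q\in\mathbb Q$ implies $r\in\mathbb Q$. An invariant $T$ is saturated if every essential solution $\gamma$ in $X$ with $\alpha(\gamma)\cup\omega(\gamma)\subset T$ has $\operatorname{im}\gamma\subset T$. A Morse decomposition is a Morse predecomposition with all members saturated and some admissible preorder being a partial order (here $\mathcal M'$ is indexed by $\mathcal Q$). For $C\subset X$, $\mathbb P_C=\{p\mid M_p\cap C\ne\emptyset\}$; for $\mathbb Q\subset\mathbb P$, $\operatorname{eSol}_{\mathbb Q}(X)$ is the set of essential solutions $\gamma$ in $X$ with $\mathbb P_{\alpha(\gamma)}\cap\mathbb Q\ne\emptyset\ne\mathbb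 P_{\omega(\gamma)}\cap\mathbb Q$, and $M_{\mathbb Q}=\bigcup\{\operatorname{im}\gamma\mid\gamma\in\operatorname{eSol}_{\mathbb Q}(X)\}$. *)

(* Defs.v *)
From HB Require Import structures.
From mathcomp Require Import all_boot all_order all_algebra.
From mathcomp Require Import all_classical all_reals all_analysis.
From mathcomp Require Import Rstruct Rstruct_topology.
Set Implicit Arguments. Unset Strict Implicit. Unset Printing Implicit Defensive.
Import Order.TTheory GRing.Theory Num.Theory.

Local Open Scope ring_scope.

(* For a finite carrier, closure under binary unions is closure under       *)
(* arbitrary unions.                                                        *)
Section FinTop.
Variable X : finType.
Variable opn : {set X} -> bool.

Definition is_topology : Prop :=
  [/\ opn finset.set0, opn [set: X],
      (forall U W, opn U -> opn W -> opn (U :&: W)) &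
      (forall U W, opn U -> opn W -> opn (U :|: W))].

Definition T0 : Prop :=
  forall x y : X, x != y -> exists U, opn U && ((x \in U) != (y \in U)).

Definition closedb (A : {set X}) : bool := opn (~: A).

Definition cl (A : {set X}) : {set X} :=
  \bigcap_(B | closedb B && (A \subset B)) B.

Definition locally_closed (A : {set X}) : Prop := closedb (cl A :\: A).

Definition RR := Rdefinitions.R.

Definition std_simplex (n : nat) : set 'rV[RR]_n.+1 :=
  [set t | (forall i, 0 <= t ord0 i) /\ \sum_i t ord0 i = 1].
Arguments std_simplex : clear implicits.

(* a (representative of a) singular n-simplex: a map on R^(n+1), only its  *)
(* values on the standard simplex matter                                     *)
Definition sing (n : nat) := 'rV[RR]_n.+1 -> X.

Definition cont_on_simplex n (s : sing n) : Prop :=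
  forall U : {set X}, opn U ->
    exists W : set 'rV[RR]_n.+1, open W /\
      forall t, std_simplex n t -> (s t \in U <-> W t).

Definition sing_in (A : {set X}) n (s : sing n) : Prop :=
  cont_on_simplex s /\ forall t, std_simplex n t -> s t \in A.

Definition schain n := seq (int * sing n).

(* coefficient of tau in a schain (singular simplices are equal iff they *)
(* agree on the standard simplex)                                          *)
Definition coef n (c : schain n) (tau : sing n) : int :=
  \sum_(p <- c) (if `[< forall t, std_simplex n t -> p.2 t = tau t >]
                 then p.1 else 0).

Definition face n (i : 'I_n.+2) (t : 'rV[RR]_n.+1) : 'rV[RR]_n.+2 :=
  \row_(j < n.+2) (if unlift i j is Some k then t ord0 k else 0).

Definition bd n (c : schain n.+1) : schain n :=
  flatten [seq [seq (((-1) ^+ i * p.1)%R, p.2 \o face i) | i : 'I_n.+2]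
          | p <- c].

Definition chain_in (A : {set X}) n (c : schain n) : Prop :=
  forall p, p \in c -> sing_in A p.2.

Definition supported_in (B : {set X}) n (c : schain n) : Prop :=
  forall tau, coef c tau != 0 -> forall t, std_simplex n t -> tau t \in B.

Definition rel_cycle (B : {set X}) (n : nat) : schain n -> Prop :=
  match n return schain n -> Prop with
  | 0 => fun _ => True
  | m.+1 => fun c => supported_in B (bd c)
  end.

Definition rel_homology_nontrivial (A B : {set X}) : Prop :=
  exists n (c : schain n), chain_in A c /\ rel_cycle B c /\
    ~ exists (d : schain n.+1) (e : schain n),
        chain_in A d /\ chain_in B e /\
        forall tau, coef c tau = coef (bd d ++ e) tau.

Variable V : {set {set X}}.

Definition multivector_field : Prop :=
  finset.partition V [set: X] /\ forall A, A \in V -> locally_closed A.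

Definition mv (x : X) : {set X} := finset.pblock V x.

Definition critical (A : {set X}) : Prop :=
  rel_homology_nontrivial (cl A) (cl A :\: A).
Definition mv_regular (A : {set X}) : Prop := ~ critical A.

Definition compatible (A : {set X}) : Prop :=
  forall x, x \in A -> mv x \subset A.

Definition compatibleb (A : {set X}) : bool := `[< compatible A >].
Definition locally_closedb (A : {set X}) : bool := `[< locally_closed A >].

Definition lcc_hull (A : {set X}) : {set X} :=
  \bigcap_(B | [&& locally_closedb B, compatibleb B & A \subset B]) B.

Definition Pi (x : X) : {set X} := cl [set x] :|: mv x.
Definition PiS (S : {set X}) : {set X} := \bigcup_(x in S) Pi x.

Definition full_solution (g : int -> X) : Prop :=
  forall t : int, g (t + 1) \in Pi (g t).

Definition alpha (g : int -> X) : {set X} :=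
  lcc_hull [set x | `[< forall t : int, exists2 s : int, s <= t & g s = x >]].
Definition omega (g : int -> X) : {set X} :=
  lcc_hull [set x | `[< forall t : int, exists2 s : int, t <= s & g s = x >]].

Definition in_single_regular (A : {set X}) : Prop :=
  exists2 W, W \in V & mv_regular W /\ A \subset W.

Definition essential (g : int -> X) : Prop :=
  full_solution g /\ ~ in_single_regular (alpha g) /\ ~ in_single_regular (omega g).

Definition essential_in (A : {set X}) (g : int -> X) : Prop :=
  essential g /\ forall t, g t \in A.

Definition InvS (S : {set X}) : {set X} :=
  [set x in S | `[< exists g, essential_in S g /\ g 0 = x >]].

Definition is_invariant (S : {set X}) : Prop := InvS S = S.

(* paths: finite solutions, given as nonempty sequences x0 :: s *)
Definition is_path (x0 : X) (s : seq X) : bool := path (fun x y => y \in Pi x) x0 s.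

Definition isolated_invariant (S : {set X}) : Prop :=
  is_invariant S /\
  exists N : {set X}, [/\ closedb N, PiS S \subset N &
    forall x0 s, is_path x0 s -> all (mem N) (x0 :: s) ->
      x0 \in S -> last x0 s \in S -> all (mem S) (x0 :: s)].

Definition link (g : int -> X) (S1 S2 : {set X}) : Prop :=
  full_solution g /\ alpha g :&: S1 != finset.set0 /\ omega g :&: S2 != finset.set0.

Definition morse_predecomposition (I : Type) (idx : set I) (M : I -> {set X}) : Prop :=
  [/\ (forall p, idx p -> isolated_invariant (M p)),
      (forall p q, idx p -> idx q -> p <> q -> [disjoint M p & M q]) &
      (forall g, essential g ->
         exists p q, [/\ idx p, idx q & link g (M p) (M q)])].

Definition admissible_preorder (I : Type) (idx : set I) (M : I -> {set X})
    (le : I -> I -> Prop) : Prop :=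
  [/\ (forall p, idx p -> le p p),
      (forall p q r, idx p -> idx q -> idx r -> le p q -> le q r -> le p r) &
      (forall g p q, idx p -> idx q -> link g (M p) (M q) -> le q p)].

Definition saturated (T : {set X}) : Prop :=
  is_invariant T /\
  forall g, essential g -> alpha g :|: omega g \subset T -> forall t, g t \in T.

Definition morse_decomposition (I : Type) (idx : set I) (M : I -> {set X}) : Prop :=
  [/\ morse_predecomposition idx M,
      (forall p, idx p -> saturated (M p)) &
      exists le, admissible_preorder idx M le /\
        (forall p q, idx p -> idx q -> le p q -> le q p -> p = q)].

Definition idxset (I : Type) (M : I -> {set X}) (C : {set X}) : set I :=
  [set p | M p :&: C != finset.set0].

Definition eSol (I : Type) (M : I -> {set X}) (Q : set I) (g : int -> X) : Prop :=
  essential g /\ (idxset M (alpha g) `&` Q !=set0)%classic /\ (idxset M (omega g) `&` Q !=set0)%classic.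

Definition MQ (I : Type) (M : I -> {set X}) (Q : set I) : {set X} :=
  [set x | `[< exists2 g, eSol M Q g & exists t, g t = x >]].

End FinTop.

Definition convex_wrt (I : Type) (le : I -> I -> Prop) (Q : set I) : Prop :=
  forall p r q, Q p -> Q q -> le p r -> le r q -> Q r.

Definition set_partition (I : Type) (QQ : set (set I)) : Prop :=
  [/\ (forall Q, QQ Q -> (Q !=set0)%classic),
      (forall p, exists2 Q, QQ Q & Q p) &
      (forall Q Q', QQ Q -> QQ Q' -> (Q `&` Q' !=set0)%classic -> Q = Q')].

Definition le_part (I : Type) (le : I -> I -> Prop) (Q Q' : set I) : Prop :=
  exists q q', [/\ Q q, Q' q' & le q q'].

Definition partial_order_on (I : Type) (idx : set I) (r : I -> I -> Prop) : Prop :=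
  [/\ (forall p, idx p -> r p p),
      (forall p q, idx p -> idx q -> r p q -> r q p -> p = q) &
      (forall p q s, idx p -> idx q -> idx s -> r p q -> r q s -> r p s)].

(* Main.v *)
Require Import Defs.
From HB Require Import structures.
From mathcomp Require Import all_boot all_order all_algebra.
From mathcomp Require Import all_classical all_reals all_analysis.
From mathcomp Require Import Rstruct Rstruct_topology.
From mathcomp Require Import zify.
Set Implicit Arguments. Unset Strict Implicit. Unset Printing Implicit Defensive.

Section Topo.
Variable X : finType.
Variable opn : {set X} -> bool.
Hypothesis top : is_topology opn.

Lemma opn_bigcup (I : finType) (Pr : pred I) (F : I -> {set X}) :
  (forall i, Pr i -> opn (F i)) -> opn (\bigcup_(i | Pr i) F i).
Proof.
case: top => h0 _ _ hU hF.
by apply: (big_ind opn) => // U W; apply: hU.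
Qed.

Lemma opn_bigcap (I : finType) (Pr : pred I) (F : I -> {set X}) :
  (forall i, Pr i -> opn (F i)) -> opn (\bigcap_(i | Pr i) F i).
Proof.
case: top => _ hT hI _ hF.
by apply: (big_ind opn) => // U W; apply: hI.
Qed.

Lemma cl_closed (A : {set X}) : closedb opn (cl opn A).
Proof.
rewrite /closedb /cl finset.setC_bigcap; apply: opn_bigcup => B /andP[].
by rewrite /closedb.
Qed.

Lemma sub_cl (A : {set X}) : A \subset cl opn A.
Proof. by apply/bigcapsP => B /andP[]. Qed.

Lemma cl_min (A C : {set X}) : closedb opn C -> A \subset C -> cl opn A \subset C.
Proof. by move=> h1 h2; apply: finset.bigcap_inf; rewrite h1 h2. Qed.

Lemma in_cl1 (x : X) : x \in cl opn [set x].
Proof. have := fintype.subsetP (sub_cl [set x]) x; rewrite inE eqxx; by apply. Qed.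

Lemma cl_sub_union (B : {set X}) : cl opn B \subset \bigcup_(z in B) cl opn [set z].
Proof.
apply: cl_min.
  rewrite /closedb finset.setC_bigcup; apply: opn_bigcap => z _; exact: cl_closed.
apply/fintype.subsetP => z zB; apply/bigcupP; exists z => //; exact: in_cl1.
Qed.

Definition Onb x := \bigcap_(W | opn W && (x \in W)) W.

Lemma Onb_open x : opn (Onb x).
Proof. by apply: opn_bigcap => W /andP[]. Qed.

Lemma Onb_in x : x \in Onb x.
Proof. by apply/bigcapP => W /andP[]. Qed.

Lemma Onb_cl x y : y \in Onb x -> x \in cl opn [set y].
Proof.
move=> hy; apply/negPn/negP => hx.
have hW : opn (~: cl opn [set y]) by exact: cl_closed.
have : y \in ~: cl opn [set y].
  by apply: (fintype.subsetP (finset.bigcap_inf (~: cl opn [set y]) _) y hy); rewrite hW inE hx.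
by rewrite inE in_cl1.
Qed.

Lemma convex_lc (B : {set X}) :
  (forall z1 w z2, z1 \in B -> z2 \in B -> w \in cl opn [set z1] ->
     z2 \in cl opn [set w] -> w \in B) -> locally_closed opn B.
Proof.
move=> hconv; rewrite /locally_closed /closedb.
set U := ~: _.
have -> : U = \bigcup_(x in U) Onb x.
  apply/setP => y; apply/idP/bigcupP => [yU|[x xU yO]].
    by exists y => //; exact: Onb_in.
  have xy := Onb_cl yO.
  move: xU; rewrite /U !inE !negb_and !negbK => /orP[xB|xncl].
    case: (boolP (y \in B)) => yB; first by apply/orP; left.
    apply/orP; right; apply/negP => ycl.
    have /bigcupP[z zB yz] := fintype.subsetP (cl_sub_union B) y ycl.
    by move/negP: yB; apply; apply: (hconv z y x).
  apply/orP; right; apply/negP => ycl; move/negP: xncl; apply.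
  apply: (fintype.subsetP (cl_min (cl_closed B) _)) xy.
  by apply/fintype.subsetP => u; rewrite inE => /eqP ->.
by apply: opn_bigcup => x _; exact: Onb_open.
Qed.

End Topo.

Import Order.TTheory GRing.Theory Num.Theory.

Section Dyn.
Local Open Scope ring_scope.
Variable X : finType.
Variable opn : {set X} -> bool.
Hypothesis top : is_topology opn.
Variable V : {set {set X}}.
Hypothesis mvf : multivector_field opn V.

Notation Pi := (Pi opn V).
Notation full := (full_solution opn V).
Notation alpha := (alpha opn V).
Notation omega := (omega opn V).

Lemma mv_self x : x \in mv V x.
Proof.
case: mvf => /and3P[/eqP hc _ _] _.
by rewrite /mv mem_pblock hc inE.
Qed.

Lemma mv_sym x y : y \in mv V x -> x \in mv V y.
Proof.
case: mvf => /and3P[/eqP hc htriv _] _ hy.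
have : mv V x == mv V y by rewrite /mv eq_pblock // hc inE.
by move/eqP <-; exact: mv_self.
Qed.

Lemma mv_Pi x y : y \in mv V x -> y \in Pi x.
Proof. by move=> h; rewrite /Pi inE h orbT. Qed.

Lemma cl_Pi x y : y \in cl opn [set x] -> y \in Pi x.
Proof. by move=> h; rewrite /Pi inE h. Qed.

Lemma Pi_self x : x \in Pi x.
Proof. by apply: cl_Pi; exact: in_cl1. Qed.

Lemma alpha_tail (g h : int -> X) a c :
  (forall t, t <= c -> g t = h (t + a)) -> alpha g = alpha h.
Proof.
move=> E; rewrite /Defs.alpha; congr lcc_hull; apply/setP => x; rewrite !inE.
apply/asboolP/asboolP => H t.
  have [s hs gs] := H (Order.min (t - a) c).
  move: hs; rewrite le_min => /andP[h1 h2].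
  exists (s + a); first by lia.
  by rewrite -E.
have [s hs gs] := H (Order.min t c + a).
have : s - a <= Order.min t c by lia.
rewrite le_min => /andP[h1 h2].
exists (s - a) => //.
by rewrite E // subrK.
Qed.

Lemma omega_tail (g h : int -> X) a c :
  (forall t, c <= t -> g t = h (t + a)) -> omega g = omega h.
Proof.
move=> E; rewrite /Defs.omega; congr lcc_hull; apply/setP => x; rewrite !inE.
apply/asboolP/asboolP => H t.
  have [s hs gs] := H (Order.max (t - a) c).
  move: hs; rewrite ge_max => /andP[h1 h2].
  exists (s + a); first by lia.
  by rewrite -E.
have [s hs gs] := H (Order.max t c + a).
have : Order.max t c <= s - a by lia.
rewrite ge_max => /andP[h1 h2].
exists (s - a) => //.
by rewrite E // subrK.
Qed.

Lemma full_shift (g : int -> X) a : full g -> full (fun t => g (t + a)).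
Proof. by move=> hg t /=; rewrite addrAC; apply: hg. Qed.

Definition glue (h1 h2 : int -> X) (t : int) := if t <= 0 then h1 t else h2 t.

Lemma glue_full h1 h2 : full h1 -> full h2 -> h1 0 = h2 0 ->
  [/\ full (glue h1 h2), alpha (glue h1 h2) = alpha h1 &
      omega (glue h1 h2) = omega h2].
Proof.
move=> f1 f2 e; split.
- move=> t; rewrite /glue.
  case: (lerP t 0) => ht; case: (lerP (t + 1) 0) => ht1.
  + exact: f1.
  + have -> : t = 0 by lia.
    by rewrite e; apply: f2.
  + lia.
  + exact: f2.
- by apply: (alpha_tail (a := 0) (c := 0)) => t ht; rewrite /glue ht addr0.
- apply: (omega_tail (a := 0) (c := 1)) => t ht; rewrite /glue addr0.
  by have -> : (t <= 0) = false by lia.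
Qed.


Definition Rch (z w : X) := exists s, is_path opn V z s /\ last z s = w.

Lemma Rch_refl z : Rch z z.
Proof. by exists [::]. Qed.

Lemma Rch_step z w u : w \in Pi z -> Rch w u -> Rch z u.
Proof. by move=> h [s [p l]]; exists (w :: s); rewrite /is_path /= h. Qed.

Lemma Rch_snoc z w u : Rch z w -> u \in Pi w -> Rch z u.
Proof.
move=> [s [p l]] h; exists (rcons s u); split; last by rewrite last_rcons.
by move: p; rewrite /is_path rcons_path => ->; rewrite /= l.
Qed.

Lemma Rch_trans z w u : Rch z w -> Rch w u -> Rch z u.
Proof.
move=> [s [p l]] [s' [p' l']]; exists (s ++ s'); split.
  by move: p p'; rewrite /is_path cat_path => -> /=; rewrite l.
by rewrite last_cat l.
Qed.

Lemma Rch_path x0 s : is_path opn V x0 s -> forall y, y \in x0 :: s ->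
  Rch x0 y /\ Rch y (last x0 s).
Proof.
elim: s x0 => [|x1 s IH] x0 /=.
  by move=> _ y; rewrite inE => /eqP ->; split; apply: Rch_refl.
rewrite /is_path /= => /andP[h p] y; rewrite inE => /orP[/eqP ->|yin].
  split; first exact: Rch_refl.
  apply: (Rch_step h); exact: (proj2 (IH x1 p x1 (mem_head _ _))).
have [r1 r2] := IH x1 p y yin.
by split => //; apply: (Rch_step h).
Qed.

Lemma sol_Rch g s n : full g -> Rch (g s) (g (s + n%:Z)).
Proof.
move=> fg; elim: n => [|n IH]; first by rewrite addr0; apply: Rch_refl.
apply: (Rch_snoc IH).
have -> : s + n.+1%:Z = (s + n%:Z) + 1 by lia.
exact: fg.
Qed.

Lemma sol_Rch' g s s' : full g -> s <= s' -> Rch (g s) (g s').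
Proof.
move=> fg hs; have := sol_Rch s `|s' - s|%N fg.
by have -> : s + `|s' - s|%N%:Z = s' by lia.
Qed.

Lemma lcc_sub (A B : {set X}) : locally_closed opn B -> compatible V B ->
  A \subset B -> lcc_hull opn V A \subset B.
Proof.
move=> h1 h2 h3; apply: finset.bigcap_inf.
by rewrite /locally_closedb /compatibleb !asboolT.
Qed.

Lemma sub_lcc (A : {set X}) : A \subset lcc_hull opn V A.
Proof. by apply/bigcapsP => B /and3P[]. Qed.

Definition Ba (g : int -> X) z : Prop := (forall t, exists2 s, s <= t & Rch (g s) z) /\
                       (forall t, exists2 s, s <= t & Rch z (g s)).
Definition BA g := [set z | `[< Ba g z >]].
Lemma inBA g z : z \in BA g <-> Ba g z.
Proof. rewrite inE; split; [exact: asboolW | exact: asboolT]. Qed.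

Definition Bo (g : int -> X) z : Prop := (forall t, exists2 s, t <= s & Rch (g s) z) /\
                       (forall t, exists2 s, t <= s & Rch z (g s)).
Definition BO g := [set z | `[< Bo g z >]].
Lemma inBO g z : z \in BO g <-> Bo g z.
Proof. rewrite inE; split; [exact: asboolW | exact: asboolT]. Qed.

Lemma alpha_reach g x : x \in alpha g ->
  forall t, exists2 s, s <= t & Rch x (g s).
Proof.
have : alpha g \subset BA g.
  apply: lcc_sub.
  - apply: (convex_lc top) => z1 w z2 /inBA[a1 b1] /inBA[a2 b2] hw hz.
    apply/inBA; split => t.
      by have [s hs r] := a1 t; exists s => //; apply: (Rch_snoc r (cl_Pi hw)).
    by have [s hs r] := b2 t; exists s => //; apply: (Rch_step (cl_Pi hz) r).
  - move=> z /inBA[a b]; apply/fintype.subsetP => w hw.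
    apply/inBA; split => t.
      by have [s hs r] := a t; exists s => //; apply: (Rch_snoc r (mv_Pi hw)).
    by have [s hs r] := b t; exists s => //; apply: (Rch_step (mv_Pi (mv_sym hw)) r).
  - apply/fintype.subsetP => z; rewrite inE => /asboolW H; apply/inBA.
    by split => t; have [s hs e] := H t; exists s => //; rewrite e; apply: Rch_refl.
by move=> /fintype.subsetP hs /hs /inBA[_ b].
Qed.

Lemma omega_reach g x : x \in omega g ->
  forall t, exists2 s, t <= s & Rch (g s) x.
Proof.
have : omega g \subset BO g.
  apply: lcc_sub.
  - apply: (convex_lc top) => z1 w z2 /inBO[a1 b1] /inBO[a2 b2] hw hz.
    apply/inBO; split => t.
      by have [s hs r] := a1 t; exists s => //; apply: (Rch_snoc r (cl_Pi hw)).
    by have [s hs r] := b2 t; exists s => //; apply: (Rch_step (cl_Pi hz) r).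
  - move=> z /inBO[a b]; apply/fintype.subsetP => w hw.
    apply/inBO; split => t.
      by have [s hs r] := a t; exists s => //; apply: (Rch_snoc r (mv_Pi hw)).
    by have [s hs r] := b t; exists s => //; apply: (Rch_step (mv_Pi (mv_sym hw)) r).
  - apply/fintype.subsetP => z; rewrite inE => /asboolW H; apply/inBO.
    by split => t; have [s hs e] := H t; exists s => //; rewrite e; apply: Rch_refl.
by move=> /fintype.subsetP hs /hs /inBO[a _].
Qed.

Lemma fin_lb (f : X -> int) : exists T, forall x, T <= f x.
Proof.
have : forall l : seq X, exists T, forall x, x \in l -> T <= f x.
  elim=> [|a l [T hT]]; first by exists 0.
  exists (Order.min (f a) T) => x; rewrite inE => /orP[/eqP->|xl].
    by rewrite ge_min lexx.
  by rewrite ge_min hT ?orbT.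
move=> /(_ (enum X))[T hT]; exists T => x; apply: hT; by rewrite mem_enum.
Qed.

Lemma fin_ub (f : X -> int) : exists T, forall x, f x <= T.
Proof.
have [T hT] := fin_lb (fun x => - f x).
by exists (- T) => x; have := hT x; lia.
Qed.

Lemma alpha_in g (S : {set X}) : (forall t, g t \in S) ->
  exists x, x \in alpha g /\ x \in S.
Proof.
move=> hS.
have [x hx] : exists x, forall t, exists2 s, s <= t & g s = x.
  apply: contrapT => H.
  have H' : forall x, exists t, forall s, s <= t -> g s <> x.
    move=> x; apply: contrapT => hn; apply: H; exists x => t.
    apply: contrapT => hs; apply: hn; exists t => s st gs; apply: hs; by exists s.
  have [f hf] := choice H'.
  have [T hT] := fin_lb f.
  by apply: (hf (g T) T (hT _)).
exists x; split.
  apply: (fintype.subsetP (sub_lcc _)); rewrite inE; exact: asboolT.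
by have [s _ <-] := hx 0.
Qed.

Lemma omega_in g (S : {set X}) : (forall t, g t \in S) ->
  exists x, x \in omega g /\ x \in S.
Proof.
move=> hS.
have [x hx] : exists x, forall t, exists2 s, t <= s & g s = x.
  apply: contrapT => H.
  have H' : forall x, exists t, forall s, t <= s -> g s <> x.
    move=> x; apply: contrapT => hn; apply: H; exists x => t.
    apply: contrapT => hs; apply: hn; exists t => s st gs; apply: hs; by exists s.
  have [f hf] := choice H'.
  have [T hT] := fin_ub f.
  by apply: (hf (g T) T (hT _)).
exists x; split.
  apply: (fintype.subsetP (sub_lcc _)); rewrite inE; exact: asboolT.
by have [s _ <-] := hx 0.
Qed.

Variable P : Type.
Variable M : P -> {set X}.

Definition Fwd (Q : set P) (y : X) := exists h, [/\ full h, h 0 = y,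
  ~ in_single_regular opn V (omega h) &
  (idxset M (omega h) `&` Q !=set0)%classic].
Definition Bwd (Q : set P) (y : X) := exists h, [/\ full h, h 0 = y,
  ~ in_single_regular opn V (alpha h) &
  (idxset M (alpha h) `&` Q !=set0)%classic].

Lemma Fwd_step Q x y : Fwd Q y -> y \in Pi x -> Fwd Q x.
Proof.
move=> [h [fh h0 hr hi]] hy.
pose g t := if t <= 0 then x else h (t - 1).
have eo : omega g = omega h.
  apply: (omega_tail (a := -1) (c := 1)) => t ht; rewrite /g.
  by have -> : (t <= 0) = false by lia.
exists g; split => //; last by rewrite eo.
- move=> t; rewrite /g.
  case: (lerP t 0) => ht; case: (lerP (t + 1) 0) => ht1.
  + exact: Pi_self.
  + have -> : t + 1 - 1 = 0 by lia.
    by rewrite h0.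
  + lia.
  + have -> : t + 1 - 1 = (t - 1) + 1 by lia.
    exact: fh.
- by rewrite eo.
Qed.

Lemma Bwd_step Q x y : Bwd Q x -> y \in Pi x -> Bwd Q y.
Proof.
move=> [h [fh h0 hr hi]] hy.
pose g t := if 0 <= t then y else h (t + 1).
have ea : alpha g = alpha h.
  apply: (alpha_tail (a := 1) (c := -1)) => t ht; rewrite /g.
  by have -> : (0 <= t) = false by lia.
exists g; split => //; last by rewrite ea.
- move=> t; rewrite /g.
  case: (lerP 0 t) => ht; case: (lerP 0 (t + 1)) => ht1.
  + exact: Pi_self.
  + lia.
  + have -> : t + 1 = 0 by lia.
    by rewrite h0.
  + have -> : t + 1 + 1 = (t + 1) + 1 by lia.
    exact: fh.
- by rewrite ea.
Qed.

Lemma Bwd_Rch Q x y : Rch x y -> Bwd Q x -> Bwd Q y.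
Proof.
move=> [s [p <-]]; elim: s x p => [|x1 s IH] x //=.
rewrite /is_path /= => /andP[h p] b.
by apply: (IH x1 p); apply: (Bwd_step b).
Qed.

Lemma Fwd_Rch Q x y : Rch x y -> Fwd Q y -> Fwd Q x.
Proof.
move=> [s [p <-]]; elim: s x p => [|x1 s IH] x //=.
rewrite /is_path /= => /andP[h p] f.
by apply: (Fwd_step _ h); apply: IH.
Qed.

Lemma MQ_char Q x : x \in MQ opn V M Q <-> Bwd Q x /\ Fwd Q x.
Proof.
split.
  rewrite inE => /asboolP[g [[fg [ra ro]] [ia io]] [t gt]].
  have ea : alpha (fun s => g (s + t)) = alpha g.
    by apply: (alpha_tail (c := 0)).
  have eo : omega (fun s => g (s + t)) = omega g.
    by apply: (omega_tail (c := 0)).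
  split; exists (fun s => g (s + t)); rewrite ?ea ?eo; split => //;
    try exact: full_shift; by rewrite add0r.
move=> [[h1 [f1 e1 r1 i1]] [h2 [f2 e2 r2 i2]]].
have [fg ea eo] := glue_full f1 f2 (etrans e1 (esym e2)).
rewrite inE; apply/asboolP; exists (glue h1 h2).
  by split; [split|split]; rewrite ?ea ?eo.
by exists 0; rewrite /glue lexx.
Qed.

Lemma MQ_sol Q x : x \in MQ opn V M Q -> exists2 G, eSol opn V M Q G & G 0 = x.
Proof.
move=> /MQ_char[[h1 [f1 e1 r1 i1]] [h2 [f2 e2 r2 i2]]].
have [fg ea eo] := glue_full f1 f2 (etrans e1 (esym e2)).
exists (glue h1 h2); first by split; [split|split]; rewrite ?ea ?eo.
by rewrite /glue lexx.
Qed.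

Lemma eSol_in Q G t : eSol opn V M Q G -> G t \in MQ opn V M Q.
Proof. by move=> h; rewrite inE; apply: asboolT; exists G => //; exists t. Qed.

End Dyn.

Unset Implicit Arguments.

Theorem theorem4p13 (X : finType) (opn : {set X} -> bool)
  (V : {set {set X}}) (P : Type) (M : P -> {set X}) (le : P -> P -> Prop)
  (QQ : set (set P)) :
  is_topology opn -> T0 opn ->
  multivector_field opn V ->
  is_invariant opn V (finset.setT : {set X}) ->
  morse_predecomposition opn V [set: P] M ->
  admissible_preorder opn V [set: P] M le ->
  set_partition QQ ->
  (forall Q, QQ Q -> convex_wrt le Q) ->
  partial_order_on QQ (le_part le) ->
  morse_decomposition opn V QQ (MQ opn V M).
Proof.
move=> top _ mvf _ [Miso _ Mlink] [_ _ leadm] [_ QQcov _] Qconv [porefl poanti potrans].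
have Minv : forall p, is_invariant opn V (M p) by move=> p; case: (Miso p I).
have Mess : forall p x, x \in M p ->
    exists k, [/\ essential opn V k, forall t, k t \in M p & k 0 = x].
  move=> p x; rewrite -{1}(Minv p) inE => /andP[_ /asboolW [k [[ek ik] k0]]].
  by exists k.
have Mp_sub : forall p (Q : set P) x, Q p -> x \in M p -> x \in MQ opn V M Q.
  move=> p Q x Qp /Mess[k [ek ik k0]]; rewrite -k0; apply: eSol_in.
  split => //; split; exists p; split => //=.
    have [y [ya yp]] := alpha_in opn V ik.
    by apply/set0Pn; exists y; rewrite inE yp ya.
  have [y [ya yp]] := omega_in opn V ik.
  by apply/set0Pn; exists y; rewrite inE yp ya.
have link_le : forall (Q Q' : set P) y, Bwd opn V M Q y ->
    Fwd opn V M Q' y -> le_part le Q' Q.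
  move=> Q Q' y [h1 [f1 e1 r1 [p1 [i1 q1]]]] [h2 [f2 e2 r2 [p2 [i2 q2]]]].
  have [fg ea eo] := glue_full f1 f2 (etrans e1 (esym e2)).
  exists p2, p1; split => //.
  apply: (leadm (glue h1 h2)) => //; split => //.
  by rewrite ea eo finset.setIC [omega _ _ _ :&: _]finset.setIC; split.
have lemA : forall (Q : set P) p x, QQ Q -> x \in M p -> x \in MQ opn V M Q -> Q p.
  move=> Q p x HQ xp /MQ_char[[h1 [f1 e1 r1 [p1 [i1 q1]]]] [h2 [f2 e2 r2 [p2 [i2 q2]]]]].
  have [k [[fk _] ik k0]] := Mess p x xp.
  have [fg ea eo] := glue_full f1 fk (etrans e1 (esym k0)).
  have l1 : le p p1.
    apply: (leadm (glue h1 k)) => //; split => //.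
    rewrite ea eo finset.setIC; split => //.
    have [y [ya yp]] := omega_in opn V ik.
    by apply/set0Pn; exists y; rewrite inE yp ya.
  have [fg' ea' eo'] := glue_full fk f2 (etrans k0 (esym e2)).
  have l2 : le p2 p.
    apply: (leadm (glue k h2)) => //; split => //.
    rewrite ea' eo' [omega _ _ _ :&: _]finset.setIC; split => //.
    have [y [ya yp]] := alpha_in opn V ik.
    by apply/set0Pn; exists y; rewrite inE yp ya.
  exact: (Qconv Q HQ p2 p p1 q2 q1 l2 l1).
have MQinv : forall Q, is_invariant opn V (MQ opn V M Q).
  move=> Q; apply/setP => x; rewrite inE; apply/andP/idP => [[]//|xQ].
  split => //; apply: asboolT.
  have [G eG G0] := MQ_sol xQ.
  exists G; split => //; split; first by case: eG.
  by move=> t; apply: eSol_in.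
have MQiso : forall Q, isolated_invariant opn V (MQ opn V M Q).
  move=> Q; split => //; exists [set: X]; split.
  - by rewrite /closedb finset.setCT; case: top.
  - exact: finset.subsetT.
  move=> x0 s hp _ h0 hl; apply/allP => y yin.
  have [r1 r2] := Rch_path hp yin.
  have [b0 _] := (MQ_char opn V M Q x0).1 h0.
  have [_ fl] := (MQ_char opn V M Q _).1 hl.
  apply/(MQ_char opn V M Q y); split.
    exact: (Bwd_Rch r1 b0).
  exact: (Fwd_Rch r2 fl).
have alink : forall g (Q Q' : set P), QQ Q -> QQ Q' ->
    link opn V g (MQ opn V M Q) (MQ opn V M Q') -> le_part le Q' Q.
  move=> g Q Q' HQ HQ' [fg [/set0Pn[x] /setIP[xa xQ] /set0Pn[y] /setIP[yo yQ]]].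
  have [s hs rx] := alpha_reach top mvf xa 0.
  have [s' hs' ry] := omega_reach top mvf yo s.
  have rxy := Rch_trans (Rch_trans rx (sol_Rch' fg hs')) ry.
  have [bx _] := (MQ_char opn V M Q x).1 xQ.
  have [_ fy] := (MQ_char opn V M Q' y).1 yQ.
  exact: (link_le Q Q' y (Bwd_Rch rxy bx) fy).
split.
- split.
  + by move=> Q _; apply: MQiso.
  + move=> Q Q' HQ HQ' neq; rewrite -setI_eq0; apply/eqP/setP => x.
    rewrite finset.in_set0; apply/negP => /setIP[xQ xQ'].
    have [b f] := (MQ_char opn V M Q x).1 xQ.
    have [b' f'] := (MQ_char opn V M Q' x).1 xQ'.
    apply: neq; apply: poanti => //.
      exact: (link_le Q' Q x b' f).
    exact: (link_le Q Q' x b f').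
  + move=> g eg; have [p [q [_ _ [fg [/set0Pn[x] /setIP[xa xp] /set0Pn[y] /setIP[yo yq]]]]]] := Mlink g eg.
    have [Q HQ Qp] := QQcov p; have [Q' HQ' Q'q] := QQcov q.
    exists Q, Q'; split => //; split => //; split; apply/set0Pn.
      by exists x; rewrite inE xa (Mp_sub p Q x Qp xp).
    by exists y; rewrite inE yo (Mp_sub q Q' y Q'q yq).
- move=> Q HQ; split => // g eg sub t.
  have [p [q [_ _ [fg [/set0Pn[x] /setIP[xa xp] /set0Pn[y] /setIP[yo yq]]]]]] := Mlink g eg.
  have xQ : x \in MQ opn V M Q by apply: (fintype.subsetP sub); rewrite inE xa.
  have yQ : y \in MQ opn V M Q by apply: (fintype.subsetP sub); rewrite inE yo orbT.
  apply: eSol_in; split => //; split.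
    exists p; split; last exact: (lemA Q p x HQ xp xQ).
    by apply/set0Pn; exists x; rewrite inE xa xp.
  exists q; split; last exact: (lemA Q q y HQ yq yQ).
  by apply/set0Pn; exists y; rewrite inE yo yq.
- exists (le_part le); split => //; split => //.
Qed.
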